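(* Let $H_{ij}$, $i=1,\ldots,b$, $j=1,\ldots,s_i$, be $n=\sum_i s_i$ null hypotheses with $p$-values $P_{ij}$, where true-null $p$-values are $U(0,1)$ and the rows $(P_{i1},\ldots,P_{is_i})$, $i=1,\ldots,b$, are mutually independent (arbitrary dependence within rows). Let $n_0\ge1$ be the number of true nulls, $s_{\max}=\max_i s_i$, and $R(\lambda)=\sum_{i=1}^b\sum_{j=1}^{s_i}I(P_{ij}\le\lambda)$. For any $\lambda$ with $(2b+3)^{-2/(b+2)}\le\lambda<1$, the estimator $$\widehat n_0^{(1)}(\mathbf P)=\frac{n-R(\lambda)+s_{\max}}{1-\lambda}$$ satisfies Property 1, i.e. it is non-decreasing in each $P_{ij}$ and $$\sum_{i=1}^b\sum_{j=1}^{s_i}I(H_{ij}=0)\,E_{DU}\left\{\frac{1}{\widehat n_0^{(1)}(\mathbf P^{(-i)},\mathbf 0)}\right\}\le 1.$$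
   Context: $H_{ij}=0$ means $H_{ij}$ is true. $\mathbf P=((P_{ij}))$ is the collection of all $p$-values; $\mathbf P^{(-i)}$ is the collection with the $i$th row deleted, and $\widehat n_0(\mathbf P^{(-i)},\mathbf 0)$ is the value of $\widehat n_0(\mathbf P)$ when all entries of the $i$th row are replaced by $0$. $E_{DU}$ denotes expectation under the Dirac-uniform configuration of $\mathbf P^{(-i)}$: the $p$-values in $\mathbf P^{(-i)}$ corresponding to false null hypotheses are set to $0$, and the remaining ones are $U(0,1)$ distributed, with the rows still mutually independent. An estimator $\widehat n_0(\mathbf P)$ is said to satisfy Property 1 if it is non-decreasing in each $P_{ij}$ and satisfies the displayed inequality. *)

(* Defs.v *)
From HB Require Import structures.
From mathcomp Require Import all_boot all_order all_algebra.
From mathcomp Require Import all_classical all_reals all_analysis.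
Set Implicit Arguments. Unset Strict Implicit. Unset Printing Implicit Defensive.
Import Order.TTheory GRing.Theory Num.Theory.
Local Open Scope classical_set_scope.
Local Open Scope ring_scope.

(* Hypotheses are indexed by rows k : 'I_b and columns j : 'I_(s k).
   A matrix of p-values is a dependent function  forall k, 'I_(s k) -> R. *)
Definition pmat (R : Type) (b : nat) (s : 'I_b -> nat) :=
  forall k : 'I_b, 'I_(s k) -> R.

Definition ntot (b : nat) (s : 'I_b -> nat) : nat := (\sum_(k < b) s k)%N.
Definition smax (b : nat) (s : 'I_b -> nat) : nat := (\max_(k < b) s k)%N.

Definition Rcount (R : realType) (b : nat) (s : 'I_b -> nat) (lam : R)
  (P : pmat R s) : nat :=
  (\sum_(k < b) \sum_(j < s k) nat_of_bool (P k j <= lam)%R)%N.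

Definition n0hat1 (R : realType) (b : nat) (s : 'I_b -> nat) (lam : R)
  (P : pmat R s) : R :=
  ((ntot s)%:R - (Rcount lam P)%:R + (smax s)%:R) / (1 - lam).

Definition upd (R : Type) (b : nat) (s : 'I_b -> nat) (P : pmat R s)
  (k : 'I_b) (j : 'I_(s k)) (x : R) : pmat R s :=
  fun k' j' => if (k' == k) && (val j' == val j) then x else P k' j'.

(* number of true nulls n0; H k j = true means H_kj is true (H_kj = 0) *)
Arguments upd {R b s} P k j x _ _.

Definition n0 (b : nat) (s : 'I_b -> nat) (H : forall k, 'I_(s k) -> bool) : nat :=
  (\sum_(k < b) \sum_(j < s k) nat_of_bool (H k j))%N.

(* Dirac-uniform configuration of (P^(-i), 0): row i replaced by zeros,
   false-null p-values set to 0, true-null p-values given by U. *)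
Definition DU_zero_row (T : Type) (R : realType) (b : nat) (s : 'I_b -> nat)
  (H : forall k, 'I_(s k) -> bool) (U : forall k, 'I_(s k) -> T -> R)
  (i : 'I_b) (t : T) : pmat R s :=
  fun k j => if k == i then 0 else if H k j then U k j t else 0.

Definition uniform01 d (T : measurableType d) (R : realType)
  (P : probability T R) (X : T -> R) : Prop :=
  measurable_fun setT X /\
  forall x : R, 0 <= x <= 1 -> P [set t | X t <= x] = x%:E.

(* The rows (U_k1, ..., U_ks_k) (true-null entries) are mutually independent:
   product rule for every finite subfamily of rows and every choice of
   measurable sets for the coordinates (rectangles generate the row sigma-algebra;
   arbitrary dependence within rows is allowed). *)
Definition rows_independent d (T : measurableType d) (R : realType)
  (P : probability T R) (b : nat) (s : 'I_b -> nat)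
  (H : forall k, 'I_(s k) -> bool) (U : forall k, 'I_(s k) -> T -> R) : Prop :=
  forall (S : {set 'I_b}) (B : forall k, 'I_(s k) -> set R),
    (forall k j, measurable (B k j)) ->
    P (\big[setI/setT]_(k in S) \big[setI/setT]_(j < s k | H k j)
          [set t | B k j (U k j t)]) =
    (\prod_(k in S)
       P (\big[setI/setT]_(j < s k | H k j) [set t | B k j (U k j t)]))%E.

(* Main.v *)
Require Import Defs.
From HB Require Import structures.
From mathcomp Require Import all_boot all_order all_algebra.
From mathcomp Require Import all_classical all_reals all_analysis.
From mathcomp Require Import measurable_realfun.
From mathcomp Require Import ring.
Import Order.TTheory GRing.Theory Num.Theory.
Local Open Scope classical_set_scope.
Local Open Scope ring_scope.

Lemma bigsetIP (T : Type) (I : finType) (P : pred I) (F : I -> set T) t :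
  (\big[setI/setT]_(i | P i) F i) t <-> (forall i, P i -> F i t).
Proof.
have gen : forall r : seq I, (\big[setI/setT]_(i <- r | P i) F i) t <-> (forall i, i \in r -> P i -> F i t).
  elim=> [|x r IH]; first by rewrite big_nil; split.
  rewrite big_cons; case: ifP => Px.
    split.
      move=> [Fx /IH Hr] i; rewrite inE => /orP[/eqP->//|ir]; exact: Hr.
    move=> Hr; split; first by apply: Hr => //; rewrite inE eqxx.
    by apply/IH => i ir; apply: Hr; rewrite inE ir orbT.
  split.
    move=> /IH Hr i; rewrite inE => /orP[/eqP->|ir]; first by rewrite Px.
    exact: Hr.
  by move=> Hr; apply/IH => i ir; apply: Hr; rewrite inE ir orbT.
rewrite gen; split=> H i; last by move=> _; apply: H.
by apply: H; rewrite mem_index_enum.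
Qed.

Lemma E_fin d (T : measurableType d) (R : realType) (P : probability T R)
  (V : finType) (X : T -> V) (psi : V -> R) :
  (forall v, measurable [set t | X t = v]) -> (forall v, 0 <= psi v) ->
  ('E_P[fun t => psi (X t)] = \sum_(v : V) (psi v)%:E * P [set t | X t = v])%E.
Proof.
move=> mX psi0.
have pw t : psi (X t) = \sum_v psi v * \1_[set t | X t = v] t.
  rewrite (bigD1 (X t)) //= indicE mem_set // mulr1 big1 ?addr0 // => v vX.
  rewrite indicE memNset ?mulr0 //= => Xv; by rewrite Xv eqxx in vX.
rewrite unlock.
rewrite (eq_integral (fun t => \sum_v ((psi v)%:E * (\1_[set t | X t = v] t)%:E))%E); last first.
  by move=> t _; rewrite pw -sumEFin; apply eq_bigr => v _; rewrite EFinM.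
rewrite (@ge0_integral_sum _ _ _ P setT measurableT _ (fun v t => ((psi v)%:E * (\1_[set t | X t = v] t)%:E)%E)) //.
- apply eq_bigr => v _.
  rewrite (@ge0_integralZl_EFin _ _ _ P setT measurableT (fun t => (\1_[set t | X t = v] t)%:E)) //.
  all: try (by rewrite integral_indic // setIT).
  all: try (by move=> t _; rewrite lee_fin indicE).
  by apply/measurable_EFinP; exact: measurable_indic.
- move=> v.
  under eq_fun do rewrite -EFinM.
  apply/measurable_EFinP.
  by apply: (measurable_funM (f:=cst (psi v))) => //.
- by move=> v t _; rewrite -EFinM lee_fin mulr_ge0 // indicE.
Qed.

Definition omg (R : realType) (b : nat) (s : 'I_b -> nat)
  (H : forall k, 'I_(s k) -> bool) (T : Type)
  (U : forall k, 'I_(s k) -> T -> R) (lam : R) (t : T)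
  : {ffun {k : 'I_b & 'I_(s k)} -> bool} :=
  [ffun y => H (tag y) (tagged y) && (lam < U (tag y) (tagged y) t)].
Arguments omg {R b s} H {T} U lam t.

Definition zr (b : nat) (s : 'I_b -> nat) (i : 'I_b)
  (w : {ffun {k : 'I_b & 'I_(s k)} -> bool}) : {ffun {k : 'I_b & 'I_(s k)} -> bool} :=
  [ffun y => (tag y != i) && w y].
Arguments zr {b s} i w.

Definition cnt (b : nat) (s : 'I_b -> nat)
  (w : {ffun {k : 'I_b & 'I_(s k)} -> bool}) : nat :=
  (\sum_(k < b) \sum_(j < s k) w (Tagged (fun k => 'I_(s k)) j))%N.
Arguments cnt {b s} w.

Lemma stepA (R : realType) (b : nat) (s : 'I_b -> nat)
  (H : forall k, 'I_(s k) -> bool) (T : Type)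
  (U : forall k, 'I_(s k) -> T -> R) (lam : R) (i : 'I_b) (t : T) :
  0 <= lam ->
  (n0hat1 lam (DU_zero_row H U i t))^-1 =
  (1 - lam) / ((cnt (zr i (omg H U lam t)))%:R + (smax s)%:R).
Proof.
move=> lam0.
have E : ntot s = (Rcount lam (DU_zero_row H U i t) + cnt (zr i (omg H U lam t)))%N.
  rewrite /ntot /Rcount /cnt -big_split /=; apply eq_bigr => k _.
  rewrite -big_split /= -[X in X = _]card_ord -sum1_card; apply eq_bigr => j _.
  rewrite !ffunE /= /DU_zero_row; case ki: (k == i) => /=; first by rewrite lam0.
  case: (H k j) => /=; last by rewrite lam0.
  by case: leP.
rewrite /n0hat1 E natrD (addrC (Rcount _ _)%:R) addrK invf_div.
done.
Qed.

Lemma nat_of_bool_le (a c : bool) : (a -> c) -> (nat_of_bool a <= nat_of_bool c)%N.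
Proof. by case: a; case: c => // /(_ isT). Qed.

Lemma monoPart (R : realType) (b : nat) (s : 'I_b -> nat) (lam : R) :
  lam < 1 ->
  forall (P : pmat R s) (k : 'I_b) (j : 'I_(s k)) (x y : R), x <= y ->
      n0hat1 lam (upd P k j x) <= n0hat1 lam (upd P k j y).
Proof.
move=> lam1 P k j x y xy.
have Rle : (Rcount lam (upd P k j y) <= Rcount lam (upd P k j x))%N.
  apply: leq_sum => k' _; apply: leq_sum => j' _; apply: nat_of_bool_le.
  rewrite /upd; case: ifP => // _; exact: le_trans.
rewrite /n0hat1 ler_wpM2r //; first by rewrite invr_ge0 subr_ge0 ltW.
by rewrite lerD2r; apply: lerB => //; rewrite ler_nat.
Qed.

Lemma pointwise_bound (R : realType) (b : nat) (s : 'I_b -> nat)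
  (H : forall k, 'I_(s k) -> bool) (w : {ffun {k : 'I_b & 'I_(s k)} -> bool}) :
  \sum_(i < b) \sum_(j < s i | H i j)
     (w (Tagged (fun k => 'I_(s k)) j))%:R / ((cnt (zr i w))%:R + (smax s)%:R) <= (1 : R).
Proof.
pose c (k : 'I_b) : R := \sum_(j < s k | H k j) (w (Tagged (fun k => 'I_(s k)) j))%:R.
pose C := \sum_k c k.
have c0 k : 0 <= c k by apply: sumr_ge0 => j _.
have cs k : c k <= (smax s)%:R.
  apply: (le_trans (y := (s k)%:R)); last by rewrite ler_nat /smax (leq_bigmax k).
  rewrite -[X in _ <= X%:R]card_ord -sum1_card natr_sum.
  apply: (le_trans (y := \sum_(j < s k) (w (Tagged (fun k => 'I_(s k)) j))%:R)).
    rewrite [X in _ <= X](bigID (fun j => H k j)) /= lerDl; exact: sumr_ge0.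
  by apply: ler_sum => j _; rewrite ler_nat; case: (w _).
have cntge i : \sum_(k | k != i) c k <= (cnt (zr i w))%:R.
  rewrite /cnt natr_sum [X in _ <= X](bigID (fun k => k != i)) /= -[X in X <= _]addr0.
  apply: lerD; last by apply: sumr_ge0 => k _; exact: ler0n.
  apply: ler_sum => k ki; rewrite natr_sum.
  rewrite [X in _ <= X](bigID (fun j => H k j)) /= -[X in X <= _]addr0.
  apply: lerD; last by apply: sumr_ge0 => j _; exact: ler0n.
  by apply: ler_sum => j _; rewrite ffunE /= ki.
have term i : \sum_(j < s i | H i j)
     (w (Tagged (fun k => 'I_(s k)) j))%:R / ((cnt (zr i w))%:R + (smax s)%:R) <= c i / C.
  rewrite -mulr_suml -/(c i).
  have [ci0|ci0] := eqVneq (c i) 0; first by rewrite ci0 !mul0r.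
  have cip : 0 < c i by rewrite lt_def ci0 c0.
  have CD : C <= (cnt (zr i w))%:R + (smax s)%:R.
    by rewrite /C (bigD1 i) //= addrC; apply: lerD; [exact: cntge|exact: cs].
  have Cp : 0 < C.
    apply: (lt_le_trans cip); rewrite /C (bigD1 i) //= lerDl; exact: sumr_ge0.
  rewrite ler_wpM2l // lef_pV2 // posrE //; exact: (lt_le_trans Cp).
apply: (le_trans (ler_sum _ (fun i _ => term i))).
rewrite -mulr_suml -/C.
have [->|C0] := eqVneq C 0; first by rewrite mul0r.
by rewrite mulfV.
Qed.

Lemma bigsetUP (T : Type) (I : finType) (P : pred I) (F : I -> set T) t :
  (\big[setU/set0]_(i | P i) F i) t <-> (exists i, P i /\ F i t).
Proof.
have gen : forall r : seq I, (\big[setU/set0]_(i <- r | P i) F i) t <->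
    (exists i, [/\ i \in r, P i & F i t]).
  elim=> [|x r IH]; first by rewrite big_nil; split => // -[i []]; rewrite in_nil.
  rewrite big_cons; case: ifP => Px.
    split.
      case=> [Fx|/IH [i [ir Pi Fi]]]; first by exists x; rewrite inE eqxx.
      by exists i; rewrite inE ir orbT.
    move=> [i [+ Pi Fi]]; rewrite inE => /orP[/eqP ix|ir]; first by move: Fi; rewrite ix; left.
    by right; apply/IH; exists i.
  split.
    by move=> /IH [i [ir Pi Fi]]; exists i; rewrite inE ir orbT.
  move=> [i [+ Pi Fi]]; rewrite inE => /orP[/eqP ix|ir]; first by rewrite ix Px in Pi.
  by apply/IH; exists i.
rewrite gen; split=> [[i [_ Pi Fi]]|[i [Pi Fi]]]; first by exists i.
by exists i; split => //; rewrite mem_index_enum.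
Qed.

Lemma fiber_comp d (T : measurableType d) (V W : finType) (X : T -> V) (F : V -> W) :
  (forall v, measurable [set t | X t = v]) -> forall u, measurable [set t | F (X t) = u].
Proof.
move=> mX u.
have -> : [set t | F (X t) = u] = \big[setU/set0]_(v | F v == u) [set t | X t = v].
  apply/seteqP; split => t /=.
    by move=> Ht; apply/bigsetUP; exists (X t); split => //; apply/eqP.
  by move/bigsetUP => [v [/eqP <- /= ->]].
by apply: bigsetU_measurable => v _; exact: mX.
Qed.

Lemma mes_gt d (T : measurableType d) (R : realType) (X : T -> R) (lam : R) :
  measurable_fun setT X -> measurable [set t | lam < X t].
Proof.
move=> mX.
have := mX measurableT `]lam, +oo[%classic (measurable_itv _).
rewrite setTI; congr measurable; apply/seteqP; split => t /=; by rewrite in_itv /= andbT.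
Qed.

Lemma mes_le d (T : measurableType d) (R : realType) (X : T -> R) (lam : R) :
  measurable_fun setT X -> measurable [set t | X t <= lam].
Proof.
move=> mX.
have := mX measurableT `]-oo, lam]%classic (measurable_itv _).
rewrite setTI; congr measurable; apply/seteqP; split => t /=; by rewrite in_itv /=.
Qed.

Lemma omg_fiber d (T : measurableType d) (R : realType) (b : nat) (s : 'I_b -> nat)
  (H : forall k, 'I_(s k) -> bool) (U : forall k, 'I_(s k) -> T -> R) (lam : R) :
  (forall k j, H k j -> measurable_fun setT (U k j)) ->
  forall w, measurable [set t | omg H U lam t = w].
Proof.
move=> mU w.
have -> : [set t | omg H U lam t = w] =
    \big[setI/setT]_(y : {k : 'I_b & 'I_(s k)}) [set t | omg H U lam t y = w y].
  apply/seteqP; split => t /=.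
    by move=> <-; apply/bigsetIP.
  by move/bigsetIP => Hy; apply/ffunP => y; exact: Hy.
apply: bigsetI_measurable => -[k j] _; rewrite /=.
under eq_set do rewrite ffunE /=.
case Hk: (H k j) => /=.
  case: (w _).
    exact: mes_gt (mU _ _ Hk).
  have -> : [set t | (lam < U k j t) = false] = [set t | U k j t <= lam].
    by apply/seteqP; split => t /=; rewrite ltNge; case: (_ <= _).
  exact: mes_le (mU _ _ Hk).
case: (w _).
  have -> : [set t : T | false = true] = set0 by apply/seteqP; split => t.
  exact: measurable0.
have -> : [set t : T | false = false] = setT by apply/seteqP; split => t.
exact: measurableT.
Qed.

Lemma prob_coord d (T : measurableType d) (R : realType) (P : probability T R)
  (X : T -> R) (lam : R) (beta : bool) :
  uniform01 P X -> 0 <= lam <= 1 ->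
  P [set t | (lam < X t) = beta] = (if beta then 1 - lam else lam)%:E.
Proof.
move=> [mX hX] hl.
have Ele : [set t | (lam < X t) = false] = [set t | X t <= lam].
  by apply/seteqP; split => t /=; rewrite ltNge; case: (_ <= _).
case: beta; last by rewrite Ele hX.
have -> : [set t | (lam < X t) = true] = ~` [set t | X t <= lam].
  by apply/seteqP; split => t /=; rewrite ltNge; case: (_ <= _).
by rewrite probability_setC ?hX ?EFinB //; exact: mes_le.
Qed.

Lemma indep_key d (T : measurableType d) (R : realType) (P : probability T R)
  (b : nat) (s : 'I_b -> nat) (H : forall k, 'I_(s k) -> bool)
  (U : forall k, 'I_(s k) -> T -> R) (lam : R) (i : 'I_b) (j0 : 'I_(s i))
  (beta : bool) (w : {ffun {k : 'I_b & 'I_(s k)} -> bool}) :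
  rows_independent P H U -> H i j0 ->
  P [set t | (omg H U lam t (Tagged (fun k => 'I_(s k)) j0), zr i (omg H U lam t)) = (beta, w)] =
  (P [set t | omg H U lam t (Tagged (fun k => 'I_(s k)) j0) = beta] *
   P [set t | zr i (omg H U lam t) = w])%E.
Proof.
move=> hind Hj0.
have Epair : [set t | (omg H U lam t (Tagged (fun k => 'I_(s k)) j0), zr i (omg H U lam t)) = (beta, w)] =
   [set t | omg H U lam t (Tagged (fun k => 'I_(s k)) j0) = beta] `&` [set t | zr i (omg H U lam t) = w].
  by apply/seteqP; split => t /=; [case=> -> ->|case=> -> ->].
case: (boolP [forall y, w y ==> (tag y != i) && H (tag y) (tagged y)]) => hc; last first.
  have E0 : [set t | zr i (omg H U lam t) = w] = set0.
    apply/seteqP; split => t //= ht; apply: (negP hc); apply/forallP => y.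
    by rewrite -ht !ffunE; apply/implyP => /andP[-> /andP[-> _]].
  by rewrite Epair E0 setI0 !measure0 mule0.
pose bset (be : bool) : set R := if be then `]lam, +oo[%classic else `]-oo, lam]%classic.
have bsetE be u : bset be u <-> (lam < u) = be.
  rewrite /bset; case: be => /=; rewrite in_itv /= ?andbT; first by split.
  by rewrite ltNge; case: (u <= lam); split.
pose B (k : 'I_b) (j : 'I_(s k)) : set R :=
  if k == i then (if val j == val j0 then bset beta else setT)
  else bset (w (Tagged (fun k => 'I_(s k)) j)).
have mbset be : measurable (bset be) by rewrite /bset; case: be; exact: measurable_itv.
have mB k j : measurable (B k j).
  by rewrite /B; case: ifP => _; [case: ifP => _ //|].
pose Rw k := \big[setI/setT]_(j < s k | H k j) [set t | B k j (U k j t)].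
have I1 := hind [set: 'I_b]%SET B mB.
have I2 := hind [set k | k != i]%SET B mB.
have Ei : Rw i = [set t | omg H U lam t (Tagged (fun k => 'I_(s k)) j0) = beta].
  apply/seteqP; split => t /=.
    move/bigsetIP => h; have := h j0 Hj0; rewrite /B !eqxx => /bsetE.
    by rewrite ffunE /= Hj0.
  rewrite ffunE /= Hj0 /= => ht; apply/bigsetIP => j hj; rewrite /B eqxx.
  by case: ifP => [/eqP/val_inj ->|_] //; apply/bsetE.
have Erest : \big[setI/setT]_(k in [set k | k != i]%SET) Rw k = [set t | zr i (omg H U lam t) = w].
  apply/seteqP; split => t /=.
    move/bigsetIP => h; apply/ffunP => -[k j]; rewrite !ffunE /=.
    move/forallP: hc => /(_ (Tagged (fun k => 'I_(s k)) j)) /= hc.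
    case ki: (k == i) => /=.
      by move: hc; rewrite ki /=; case: (w _).
    have hk : k \in [set k | k != i]%SET by rewrite inE ki.
    move/bigsetIP: (h k hk) => hk'.
    case Hk: (H k j) => /=.
      by move: (hk' j Hk); rewrite /B ki => /bsetE.
    by move: hc; rewrite Hk andbF; case: (w _).
  move=> ht; apply/bigsetIP => k; rewrite inE => ki; apply/bigsetIP => j hj.
  rewrite /B (negbTE ki); apply/bsetE.
  by move/ffunP: ht => /(_ (Tagged (fun k => 'I_(s k)) j)); rewrite !ffunE /= ki hj.
have Ebig : \big[setI/setT]_(k in [set: 'I_b]%SET) Rw k =
    Rw i `&` \big[setI/setT]_(k in [set k | k != i]%SET) Rw k.
  rewrite (bigD1 i); last by rewrite !inE.
  congr (_ `&` _); apply eq_bigl => k; rewrite !inE.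
  done.
rewrite Epair -Ei -Erest -Ebig I1 I2 (bigD1 i) /=; last by rewrite !inE.
by congr (_ * _)%E; apply eq_bigl => k; rewrite !inE.
Qed.

Lemma prob_omg d (T : measurableType d) (R : realType) (P : probability T R)
  (b : nat) (s : 'I_b -> nat) (H : forall k, 'I_(s k) -> bool)
  (U : forall k, 'I_(s k) -> T -> R) (lam : R) (i : 'I_b) (j0 : 'I_(s i)) (be : bool) :
  uniform01 P (U i j0) -> H i j0 -> 0 <= lam <= 1 ->
  P [set t | omg H U lam t (Tagged (fun k => 'I_(s k)) j0) = be] =
  (if be then 1 - lam else lam)%:E.
Proof.
move=> hU Hj0 hl; rewrite -(@prob_coord _ _ _ P _ lam be hU hl); congr (P _).
by apply/seteqP; split => t /=; rewrite ffunE /= Hj0.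
Qed.

Lemma factor d (T : measurableType d) (R : realType) (P : probability T R)
  (b : nat) (s : 'I_b -> nat) (H : forall k, 'I_(s k) -> bool)
  (U : forall k, 'I_(s k) -> T -> R) (lam : R) (i : 'I_b) (j0 : 'I_(s i))
  (g : {ffun {k : 'I_b & 'I_(s k)} -> bool} -> R) :
  (forall k j, H k j -> uniform01 P (U k j)) -> rows_independent P H U -> H i j0 ->
  0 <= lam <= 1 -> (forall w, 0 <= g w) ->
  ('E_P[fun t => ((1 - lam) * g (zr i (omg H U lam t)))%R] =
  'E_P[fun t => ((omg H U lam t (Tagged (fun k => 'I_(s k)) j0))%:R * g (zr i (omg H U lam t)))%R])%E.
Proof.
move=> hU hind Hj0 hl g0.
have mU k j : H k j -> measurable_fun setT (U k j) by move=> /hU [].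
have mX := @fiber_comp _ _ _ _ _ (fun w : {ffun {k : 'I_b & 'I_(s k)} -> bool} =>
   (w (Tagged (fun k => 'I_(s k)) j0), zr i w)) (@omg_fiber _ _ _ _ _ H U lam mU).
have l1 : 0 <= 1 - lam by rewrite subr_ge0; case/andP: hl.
rewrite (@E_fin _ _ _ P _ (fun t => (omg H U lam t (Tagged (fun k => 'I_(s k)) j0), zr i (omg H U lam t)))
   (fun p => (1 - lam) * g p.2) mX (fun p => mulr_ge0 l1 (g0 _))).
rewrite (@E_fin _ _ _ P _ (fun t => (omg H U lam t (Tagged (fun k => 'I_(s k)) j0), zr i (omg H U lam t)))
   (fun p => (p.1)%:R * g p.2) mX (fun p => mulr_ge0 (ler0n _ _) (g0 _))).
have pairE (G : bool * {ffun {k : 'I_b & 'I_(s k)} -> bool} -> \bar R) :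
    (\sum_p G p = \sum_(be : bool) \sum_w G (be, w))%E.
  by rewrite pair_bigA; apply eq_bigr => -[].
rewrite !pairE !big_bool -!big_split /=; apply eq_bigr => w _.
rewrite !indep_key // !prob_omg //.
have mw : measurable [set t | zr i (omg H U lam t) = w].
  exact: (@fiber_comp _ _ _ _ _ (zr i) (@omg_fiber _ _ _ _ _ H U lam mU)).
rewrite -(fineK (fin_num_measure P _ mw)).
rewrite -!EFinM -!EFinD; congr EFin.
ring.
all: exact: hU.
Qed.

Theorem mainTheorem2 (R : realType) (b : nat) (s : 'I_b -> nat)
  (H : forall k : 'I_b, 'I_(s k) -> bool) (lam : R) :
  (forall k, (0 < s k)%N) ->
  (1 <= n0 H)%N ->
  ((2 * b + 3)%:R `^ (- (2 / (b + 2)%:R)) <= lam) -> lam < 1 ->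
  (* non-decreasing in each P_ij *)
  (forall (P : pmat R s) (k : 'I_b) (j : 'I_(s k)) (x y : R), x <= y ->
      n0hat1 lam (upd P k j x) <= n0hat1 lam (upd P k j y)) /\
  (* the displayed inequality, for every Dirac-uniform configuration *)
  (forall (d : measure_display) (T : measurableType d) (P : probability T R)
          (U : forall k : 'I_b, 'I_(s k) -> T -> R),
      (forall k j, H k j -> uniform01 P (U k j)) ->
      rows_independent P H U ->
      (\sum_(i < b) \sum_(j < s i | H i j)
          'E_P[fun t => ((n0hat1 lam (DU_zero_row H U i t))^-1)%R] <= 1)%E).
Proof.
move=> _ _ hlam lam1; split; first exact: monoPart.
move=> d T P U hU hind.
have lam0 : 0 < lam.
  by apply: lt_le_trans hlam; apply: powR_gt0; rewrite ltr0n addn3.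
have hl : 0 <= lam <= 1 by rewrite (ltW lam0) (ltW lam1).
have mU k j : H k j -> measurable_fun setT (U k j) by move=> /hU [].
pose g (w : {ffun {k : 'I_b & 'I_(s k)} -> bool}) : R := ((cnt w)%:R + (smax s)%:R)^-1.
have g0 w : 0 <= g w by rewrite /g invr_ge0 addr_ge0.
pose q w := fine (P [set t | omg H U lam t = w]).
have Pq w : P [set t | omg H U lam t = w] = (q w)%:E.
  by rewrite fineK // fin_num_measure //; exact: (@omg_fiber _ _ _ _ _ H U lam mU).
have q0 w : 0 <= q w by rewrite /q fine_ge0 // measure_ge0.
have step i j : H i j -> ('E_P[fun t => ((n0hat1 lam (DU_zero_row H U i t))^-1)%R] =
    (\sum_(w : {ffun {k : 'I_b & 'I_(s k)} -> bool}) ((w (Tagged (fun k => 'I_(s k)) j))%:R * g (zr i w) * q w))%:E)%E.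
  move=> hij.
  have -> : (fun t => (n0hat1 lam (DU_zero_row H U i t))^-1) =
            (fun t => (1 - lam) * g (zr i (omg H U lam t))).
    by apply: funext => t; rewrite stepA // ltW.
  rewrite (@factor _ _ _ P _ _ H U lam i j g hU hind hij hl g0).
  rewrite (@E_fin _ _ _ P _ (omg H U lam)
     (fun w : {ffun {k : 'I_b & 'I_(s k)} -> bool} => (w (Tagged (fun k => 'I_(s k)) j))%:R * g (zr i w))
     (@omg_fiber _ _ _ _ _ H U lam mU) (fun w => mulr_ge0 (ler0n _ _) (g0 _))).
  by rewrite -sumEFin; apply eq_bigr => w _; rewrite Pq EFinM.
have one : \sum_(w : {ffun {k : 'I_b & 'I_(s k)} -> bool}) q w = 1.
  have := @E_fin _ _ _ P _ (omg H U lam) (fun _ => 1) (@omg_fiber _ _ _ _ _ H U lam mU)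
     (fun _ => ler01).
  rewrite (_ : (fun t => 1) = cst 1) // expectation_cst.
  under eq_bigr do rewrite Pq mul1e.
  by move=> h; apply: EFin_inj; rewrite -sumEFin -h.
under eq_bigr => i _ do under eq_bigr => j hj do rewrite (step i j hj).
under eq_bigr do rewrite sumEFin.
rewrite sumEFin lee_fin.
apply: (@le_trans _ _ (\sum_(w : {ffun {k : 'I_b & 'I_(s k)} -> bool}) q w)); last by rewrite one.
under eq_bigr do rewrite exchange_big.
rewrite exchange_big /=; apply: ler_sum => w _.
under eq_bigr do rewrite -mulr_suml.
rewrite -mulr_suml; apply: ler_piMl => //.
exact: pointwise_bound.
Qed.
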